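(* Let $\alpha=\frac{8}{97}(11-2\sqrt6)$. The function $$x\mapsto \frac{E(x)^2-(1-x)K(x)^2}{x^2K(x)}$$ is strictly increasing on $(0,\alpha)$, and for all $x\in(0,\alpha)$, $$E(x)^2-(1-x)K(x)^2\ge \frac{\pi}{16}\,x^2K(x).$$
   Context: $K(x)={\cal K}(\sqrt x)$ and $E(x)={\cal E}(\sqrt x)$ for $x\in[0,1)$, where ${\cal K}(r)=\int_0^{\pi/2}(1-r^2\sin^2t)^{-1/2}dt$ and ${\cal E}(r)=\int_0^{\pi/2}(1-r^2\sin^2t)^{1/2}dt$ are the complete elliptic integrals of the first and second kind. *)

(* Defs.v *)
From Stdlib Require Import Reals.
From Coquelicot Require Import Coquelicot.
Open Scope R_scope.

Definition cK (r : R) : R :=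
  RInt (fun t => / sqrt (1 - r ^ 2 * sin t ^ 2)) 0 (PI / 2).
Definition cE (r : R) : R :=
  RInt (fun t => sqrt (1 - r ^ 2 * sin t ^ 2)) 0 (PI / 2).

Definition K (x : R) : R := cK (sqrt x).
Definition E (x : R) : R := cE (sqrt x).

Definition alpha8 : R := 8 / 97 * (11 - 2 * sqrt 6).

Definition ratio8 (x : R) : R :=
  (E x ^ 2 - (1 - x) * K x ^ 2) / (x ^ 2 * K x).

(* Main.v *)
Require Import Defs.
From Stdlib Require Import Reals Lra Psatz.
From Coquelicot Require Import Coquelicot.
Open Scope R_scope.

Definition ph (m j : nat) (x t : R) : R :=
  (sin t ^ 2) ^ m / (sqrt (1 - x * sin t ^ 2) * (1 - x * sin t ^ 2) ^ j).
Definition Phi (m j : nat) (x : R) : R := RInt (ph m j x) 0 (PI / 2).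

Lemma s2_bounds t : 0 <= sin t ^ 2 <= 1.
Proof. replace (sin t ^ 2) with (sin t * sin t) by ring. destruct (SIN_bound t). nra. Qed.

Lemma w_pos x t : -1 < x < 1 -> 0 < 1 - x * sin t ^ 2.
Proof. intros Hx. pose proof (s2_bounds t). set (y := sin t ^ 2) in *.
 destruct (Rle_lt_dec 0 x); nra. Qed.

Lemma deriv_core u m j x : 0 < 1 - x * u ->
  is_derive (fun z => u ^ m / (sqrt (1 - z * u) * (1 - z * u) ^ j)) x
    ((INR j + /2) * (u ^ (S m) / (sqrt (1 - x * u) * (1 - x * u) ^ (S j)))).
Proof. intros Hw.
 assert (HS0 : 0 < sqrt (1 - x * u)) by (apply sqrt_lt_R0; lra).
 assert (HSS : sqrt (1 - x*u) * sqrt (1 - x*u) = 1 - x*u) by (apply sqrt_sqrt; lra).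
 auto_derive.
 - split; [lra|]. split; auto. apply Rmult_integral_contrapositive_currified.
   + replace (1 + - (x*u)) with (1 - x*u) by ring. lra.
   + apply pow_nonzero. lra.
 - replace (1 + - (x*u)) with (1 - x*u) by ring.
   set (S := sqrt (1 - x*u)) in *. rewrite <- HSS.
   destruct j as [|j].
   + simpl. field. lra.
   + rewrite S_INR. simpl pred. simpl pow. field. split; [|lra].
     apply pow_nonzero. apply Rmult_integral_contrapositive_currified; lra.
Qed.

Lemma ph_deriv m j x t : -1 < x < 1 ->
  is_derive (fun z => ph m j z t) x ((INR j + /2) * ph (S m) (S j) x t).
Proof. intros Hx. unfold ph. apply deriv_core. now apply w_pos. Qed.

Lemma ph_cont_t m j x t : -1 < x < 1 -> continuous (ph m j x) t.
Proof. intros Hx. apply (@ex_derive_continuous R_AbsRing R_NormedModule). unfold ph.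
 pose proof (w_pos x t Hx).
 assert (0 < sqrt (1 - x * sin t ^ 2)) by (apply sqrt_lt_R0; lra).
 auto_derive. replace (1 + - (x * (sin t * (sin t * 1)))) with (1 - x * sin t ^ 2) by ring.
 repeat split; try lra. apply Rmult_integral_contrapositive_currified; try lra.
 apply pow_nonzero; lra. Qed.

Lemma ph_exRInt m j x a b : -1 < x < 1 -> ex_RInt (ph m j x) a b.
Proof. intros Hx. apply (@ex_RInt_continuous R_CompleteNormedModule). intros z _. now apply ph_cont_t. Qed.

Lemma ph_cont2 m j x t : -1 < x < 1 -> continuity_2d_pt (ph m j) x t.
Proof. intros Hx. pose proof (w_pos x t Hx) as Hw. unfold ph.
 assert (Hs : continuity_2d_pt (fun u v : R => sin v ^ 2) x t).
 { apply (continuity_1d_2d_pt_comp (fun v => sin v ^ 2) (fun u v => v)).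
   reg. apply continuity_2d_pt_id2. }
 assert (HW : continuity_2d_pt (fun u v : R => 1 - u * sin v ^ 2) x t).
 { apply continuity_2d_pt_minus. apply continuity_2d_pt_const.
   apply continuity_2d_pt_mult. apply continuity_2d_pt_id1. exact Hs. }
 apply continuity_2d_pt_mult.
 - apply (continuity_1d_2d_pt_comp (fun y => y ^ m) (fun u v => sin v ^ 2)). reg. exact Hs.
 - apply continuity_2d_pt_inv.
   + apply continuity_2d_pt_mult.
     * apply (continuity_1d_2d_pt_comp sqrt (fun u v => 1 - u * sin v ^ 2)).
       apply continuity_pt_sqrt; lra. exact HW.
     * apply (continuity_1d_2d_pt_comp (fun y => y ^ j) (fun u v => 1 - u * sin v ^ 2)).
       reg. exact HW.
   + apply Rmult_integral_contrapositive_currified.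
     * assert (0 < sqrt (1 - x * sin t ^ 2)) by (apply sqrt_lt_R0; lra). lra.
     * apply pow_nonzero; lra.
Qed.

Lemma Phi_deriv m j x : -1 < x < 1 ->
  is_derive (Phi m j) x ((INR j + /2) * Phi (S m) (S j) x).
Proof. intros Hx. unfold Phi.
 assert (Hloc : locally x (fun y => -1 < y < 1)).
 { apply (locally_interval _ x (-1) 1); simpl; try lra. intros y H1 H2. simpl in *; lra. }
 assert (E : RInt (ph (S m) (S j) x) 0 (PI/2) * (INR j + /2)
            = RInt (fun t => Derive (fun u => ph m j u t) x) 0 (PI/2) ).
 { rewrite Rmult_comm. symmetry. apply is_RInt_unique.
   apply (is_RInt_ext (fun t => scal (INR j + /2) (ph (S m) (S j) x t))).
   - intros t _. symmetry. apply is_derive_unique. exact (ph_deriv m j x t Hx).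
   - apply (@is_RInt_scal R_NormedModule). apply (@RInt_correct R_CompleteNormedModule). now apply ph_exRInt. }
 rewrite Rmult_comm, E.
 apply is_derive_RInt_param.
 - apply (filter_imp (fun y => -1 < y < 1)); [|exact Hloc].
   intros y Hy t _. eexists. apply ph_deriv. exact Hy.
 - intros t _.
   apply (continuity_2d_pt_ext_loc (fun u v => (INR j + /2) * ph (S m) (S j) u v)).
   + exists (mkposreal ((1 - Rabs x)/2) ltac:(unfold Rabs; destruct Rcase_abs; lra)).
     intros u v Hu _. simpl in Hu. symmetry. apply is_derive_unique. apply ph_deriv.
     unfold Rabs in *; destruct (Rcase_abs (u - x)); destruct (Rcase_abs x); lra.
   + apply continuity_2d_pt_mult. apply continuity_2d_pt_const. now apply ph_cont2.
 - apply (filter_imp (fun y => -1 < y < 1)); [|exact Hloc]. intros y Hy. now apply ph_exRInt.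
Qed.
Lemma ftc_fun (x t : R) : -1 < x < 1 ->
  is_derive (fun t => sin t * cos t / sqrt (1 - x * sin t ^ 2)) t
   (ph 0 0 x t - ph 1 0 x t - (1 - x) * ph 1 1 x t).
Proof. intros Hx. pose proof (w_pos x t Hx) as Hw.
 assert (HS0 : 0 < sqrt (1 - x * sin t ^ 2)) by (apply sqrt_lt_R0; lra).
 assert (HSS : sqrt (1 - x * sin t ^ 2) * sqrt (1 - x * sin t ^ 2) = 1 - x * sin t ^ 2) by (apply sqrt_sqrt; lra).
 auto_derive.
 - replace (1 + - (x * (sin t * (sin t * 1)))) with (1 - x * sin t ^ 2) by ring.
   repeat split; lra.
 - unfold ph. replace (1 + - (x * (sin t * (sin t * 1)))) with (1 - x * sin t ^ 2) by ring.
   set (Q := sqrt (1 - x * sin t ^ 2)) in *.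
   pose proof (sin2_cos2 t) as SC. unfold Rsqr in SC.
   replace (cos t * cos t) with (1 - sin t * sin t) by lra.
   clearbody Q. clear Hw. revert SC HSS. generalize (sin t) (cos t). intros a b SC HSS.
   assert (HQ2 : Q ^ 2 = 1 - x * a ^ 2) by (rewrite <- HSS; ring).
   assert (Hb2 : b ^ 2 = 1 - a ^ 2) by (rewrite <- SC; ring).
   field_simplify; try (repeat split; intro Hc; nra). rewrite HQ2, Hb2. replace (Q ^ 3) with (Q * Q ^ 2) by ring. rewrite HQ2. assert (W : 0 < 1 - x * a ^ 2) by (rewrite <- HQ2; nra). field; repeat split; intro Hc; nra.
Qed.


Lemma lin_scal (f : R -> R) If c a b : is_RInt f a b If -> is_RInt (fun v => c * f v) a b (c * If).
Proof. intros H. exact (@is_RInt_scal R_NormedModule f a b c If H). Qed.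

Lemma lin_add (F f : R -> R) IF If c a b : is_RInt F a b IF -> is_RInt f a b If ->
  is_RInt (fun v => F v + c * f v) a b (IF + c * If).
Proof. intros H1 H2. exact (@is_RInt_plus R_NormedModule F (fun v => c * f v) a b IF (c * If) H1 (lin_scal f If c a b H2)). Qed.

Lemma lin5 (f1 f2 f3 f4 f5 : R -> R) I1 I2 I3 I4 I5 c1 c2 c3 c4 c5 a b :
  is_RInt f1 a b I1 -> is_RInt f2 a b I2 -> is_RInt f3 a b I3 ->
  is_RInt f4 a b I4 -> is_RInt f5 a b I5 ->
  is_RInt (fun v => c1 * f1 v + c2 * f2 v + c3 * f3 v + c4 * f4 v + c5 * f5 v) a b
    (c1 * I1 + c2 * I2 + c3 * I3 + c4 * I4 + c5 * I5).
Proof. intros H1 H2 H3 H4 H5.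
 apply lin_add; [|assumption]. apply lin_add; [|assumption]. apply lin_add; [|assumption].
 apply lin_add; [|assumption]. apply lin_scal; assumption.
Qed.

Lemma Phi_is m j x : -1 < x < 1 -> is_RInt (ph m j x) 0 (PI/2) (Phi m j x).
Proof. intros. apply (@RInt_correct R_CompleteNormedModule). now apply ph_exRInt. Qed.

Lemma sq_facts x t : -1 < x < 1 -> 0 < sqrt (1 - x * sin t ^ 2) /\
  sqrt (1 - x * sin t ^ 2) * sqrt (1 - x * sin t ^ 2) = 1 - x * sin t ^ 2.
Proof. intros Hx. pose proof (w_pos x t Hx). split.
 apply sqrt_lt_R0; lra. apply sqrt_sqrt; lra. Qed.

Lemma id_B2 x : -1 < x < 1 -> x * Phi 2 1 x = Phi 1 1 x - Phi 1 0 x.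
Proof. intros Hx.
 assert (H := lin_scal _ _ x 0 (PI/2) (Phi_is 2 1 x Hx)).
 assert (H' := lin_add _ _ _ _ (-1) 0 (PI/2) (Phi_is 1 1 x Hx) (Phi_is 1 0 x Hx)).
 assert (Heq : forall v, x * ph 2 1 x v = ph 1 1 x v + -1 * ph 1 0 x v).
 { intros v. destruct (sq_facts x v Hx) as [H1 H2]. unfold ph.
   set (Q := sqrt (1 - x * sin v ^ 2)) in *. set (s := sin v ^ 2) in *.
   assert (0 < 1 - x * s) by (unfold s; apply w_pos; exact Hx).
   field. split; lra. }
 apply (is_RInt_ext _ _ _ _ _ (fun v _ => Heq v)) in H.
 pose proof (is_RInt_unique _ _ _ _ H) as U1. pose proof (is_RInt_unique _ _ _ _ H') as U2.
 rewrite U1 in U2. lra.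
Qed.

Lemma id_B1 x : -1 < x < 1 -> Phi 0 0 x - Phi 1 0 x - (1 - x) * Phi 1 1 x = 0.
Proof. intros Hx.
 set (df := fun t => ph 0 0 x t - ph 1 0 x t - (1 - x) * ph 1 1 x t).
 assert (HI : is_RInt df 0 (PI/2)
   (minus ((fun t => sin t * cos t / sqrt (1 - x * sin t ^ 2)) (PI/2))
          ((fun t => sin t * cos t / sqrt (1 - x * sin t ^ 2)) 0))).
 { apply (@is_RInt_derive R_CompleteNormedModule (fun t => sin t * cos t / sqrt (1 - x * sin t ^ 2)) df 0 (PI/2)).
   - intros t _. apply ftc_fun. exact Hx.
   - intros t _. apply (@ex_derive_continuous R_AbsRing R_NormedModule). unfold df, ph.
     destruct (sq_facts x t Hx) as [H1 H2].
     pose proof (w_pos x t Hx).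
     auto_derive. replace (1 + - (x * (sin t * (sin t * 1)))) with (1 - x * sin t ^ 2) by ring.
     repeat split; try lra; apply Rmult_integral_contrapositive_currified; try lra;
     apply pow_nonzero; lra. }
 simpl in HI. rewrite cos_PI2, cos_0, sin_0 in HI.
 assert (Hz1 : forall a b, a * 0 / b = 0) by (intros; unfold Rdiv; ring).
 assert (Hz2 : forall b, 0 * 1 / b = 0) by (intros; unfold Rdiv; ring).
 rewrite Hz1, Hz2, minus_eq_zero in HI.
 assert (H2 := lin_add _ _ _ _ (-(1-x)) 0 (PI/2)
     (lin_add _ _ _ _ (-1) 0 (PI/2) (Phi_is 0 0 x Hx) (Phi_is 1 0 x Hx)) (Phi_is 1 1 x Hx)).
 assert (Heq : forall v, ph 0 0 x v + -1 * ph 1 0 x v + - (1 - x) * ph 1 1 x v = df v).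
 { intros v. unfold df. ring. }
 apply (is_RInt_ext _ _ _ _ _ (fun v _ => Heq v)) in H2.
 pose proof (is_RInt_unique _ _ _ _ H2) as U1. pose proof (is_RInt_unique _ _ _ _ HI) as U2.
 rewrite U1 in U2. unfold zero in U2; simpl in U2. lra.
Qed.

Lemma ph_nonneg m j x t : -1 < x < 1 -> 0 <= ph m j x t.
Proof. intros Hx. destruct (sq_facts x t Hx) as [H1 H2]. pose proof (w_pos x t Hx).
 pose proof (s2_bounds t). unfold ph. apply Rdiv_le_0_compat.
 apply pow_le; lra. apply Rmult_lt_0_compat; [lra|]. apply pow_lt; lra. Qed.

Lemma Phi_nonneg m j x : -1 < x < 1 -> 0 <= Phi m j x.
Proof. intros Hx. unfold Phi. apply RInt_ge_0.
 pose proof PI_RGT_0; lra. now apply ph_exRInt. intros t _. now apply ph_nonneg. Qed.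

Lemma sqrt_w_le1 x t : 0 <= x < 1 -> sqrt (1 - x * sin t ^ 2) <= 1.
Proof. intros Hx. pose proof (s2_bounds t).
 assert (0 <= x * sin t ^ 2) by (apply Rmult_le_pos; lra).
 apply Rle_trans with (sqrt 1); [apply sqrt_le_1_alt; lra | rewrite sqrt_1; lra]. Qed.

Lemma inv_ge1 a : 0 < a <= 1 -> 1 <= / a.
Proof. intros H. apply Rle_trans with (/1); [rewrite Rinv_1; lra| apply Rinv_le_contravar; lra]. Qed.

Lemma Phi00_ge x : 0 <= x < 1 -> PI / 2 <= Phi 0 0 x.
Proof. intros Hx. assert (Hx' : -1 < x < 1) by lra.
 assert (E1 : RInt (fun _ => 1) 0 (PI/2) = PI/2).
 { rewrite (@RInt_const R_CompleteNormedModule). unfold scal; simpl. unfold mult; simpl. ring. }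
 rewrite <- E1 at 1. unfold Phi. apply RInt_le.
 pose proof PI_RGT_0; lra. apply (@ex_RInt_const R_CompleteNormedModule). now apply ph_exRInt.
 intros t _. destruct (sq_facts x t Hx') as [H1 H2]. pose proof (sqrt_w_le1 x t Hx).
 unfold ph. rewrite !pow_O, Rmult_1_r. unfold Rdiv. rewrite Rmult_1_l.
 apply inv_ge1; lra. Qed.

Lemma Phi00_0 : Phi 0 0 0 = PI / 2.
Proof. unfold Phi.
 assert (E1 : RInt (fun _ => 1) 0 (PI/2) = PI/2).
 { rewrite (@RInt_const R_CompleteNormedModule). unfold scal; simpl. unfold mult; simpl. ring. }
 rewrite <- E1 at 2. apply RInt_ext. intros t _. unfold ph.
 replace (1 - 0 * sin t ^ 2) with 1 by ring. rewrite sqrt_1, !pow_O. lra. Qed.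

Lemma Phi10_0 : Phi 1 0 0 = PI / 4.
Proof. unfold Phi.
 assert (HI : is_RInt (fun t => sin t ^ 2) 0 (PI/2)
   (minus ((fun t => (t - sin t * cos t) / 2) (PI/2)) ((fun t => (t - sin t * cos t) / 2) 0))).
 { apply (@is_RInt_derive R_CompleteNormedModule (fun t => (t - sin t * cos t) / 2) (fun t => sin t ^ 2) 0 (PI/2)).
   - intros t _. auto_derive; auto. pose proof (sin2_cos2 t) as SC. unfold Rsqr in SC.
     change RinvImpl.Rinv with Rinv. field_simplify. nra.
   - intros t _. apply (@ex_derive_continuous R_AbsRing R_NormedModule). auto_derive. auto. }
 cbv beta in HI. rewrite cos_PI2, cos_0, sin_0 in HI.
 apply (@is_RInt_unique R_CompleteNormedModule) in HI.
 rewrite <- (RInt_ext (fun t => sin t ^ 2)).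
 - rewrite HI. unfold minus, plus, opp; simpl. field.
 - intros t _. unfold ph. replace (1 - 0 * sin t ^ 2) with 1 by ring. rewrite sqrt_1, !pow_O, pow_1, Rmult_1_r. unfold Rdiv. rewrite Rinv_1, Rmult_1_r. reflexivity.
Qed.

Lemma Phi10_ge x : 0 <= x < 1 -> PI / 4 <= Phi 1 0 x.
Proof. intros Hx. assert (Hx' : -1 < x < 1) by lra. assert (H0 : -1 < 0 < 1) by lra.
 rewrite <- Phi10_0. unfold Phi. apply RInt_le.
 pose proof PI_RGT_0; lra. now apply ph_exRInt. now apply ph_exRInt.
 intros t _. destruct (sq_facts x t Hx') as [H1 H2]. pose proof (sqrt_w_le1 x t Hx).
 pose proof (s2_bounds t).
 unfold ph. replace (1 - 0 * sin t ^ 2) with 1 by ring. rewrite sqrt_1, !pow_O, !pow_1, !Rmult_1_r.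
 unfold Rdiv. rewrite Rinv_1, Rmult_1_r.
 rewrite <- (Rmult_1_r (sin t ^ 2)) at 1. apply Rmult_le_compat_l. lra.
 apply inv_ge1; lra. Qed.

Lemma K_eq x : 0 <= x -> K x = Phi 0 0 x.
Proof. intros Hx. unfold K, cK, Phi. apply RInt_ext. intros t _. unfold ph.
 rewrite pow2_sqrt by lra. rewrite !pow_O. unfold Rdiv. rewrite Rmult_1_r, Rmult_1_l. reflexivity. Qed.

Lemma E_eq x : 0 <= x < 1 -> E x = Phi 0 0 x - x * Phi 1 0 x.
Proof. intros Hx. assert (Hx' : -1 < x < 1) by lra.
 assert (H := lin_add _ _ _ _ (-x) 0 (PI/2) (Phi_is 0 0 x Hx') (Phi_is 1 0 x Hx')).
 apply (@is_RInt_unique R_CompleteNormedModule) in H. replace (Phi 0 0 x - x * Phi 1 0 x) with (Phi 0 0 x + - x * Phi 1 0 x) by ring.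
 rewrite <- H. unfold E, cE. apply RInt_ext. intros t _. rewrite pow2_sqrt by lra.
 destruct (sq_facts x t Hx') as [H1 H2]. unfold ph.
 set (Q := sqrt (1 - x * sin t ^ 2)) in *.
 pose proof (w_pos x t Hx').
 match goal with |- @eq _ ?a ?b => change (@eq R a b) end.
 transitivity ((Q*Q)/Q). field; lra. rewrite H2. field; lra. Qed.

Lemma bern_id s t a b : a = 49/100 + 51/100*s -> b = 49/100 + 51/100*t ->
 4*(2*a*b+(1-b)*(a/2-3*b/4))*(2*a*b+(1-a)*(b/2-3*a/4)) - a*b*((3/2)*(a+b)+a*b/2)^2 = (363766863999/4000000000000)*(s^0*(1-s)^3*(t^0*(1-t)^3)) + (25098794259/40000000000)*(s^0*(1-s)^3*(t^1*(1-t)^2)) + (267155547/200000000)*(s^0*(1-s)^3*(t^2*(1-t)^1)) + (546399/500000)*(s^0*(1-s)^3*(t^3*(1-t)^0)) + (25098794259/40000000000)*(s^1*(1-s)^2*(t^0*(1-t)^3)) + (764922591/200000000)*(s^1*(1-s)^2*(t^1*(1-t)^2)) + (28726047/4000000)*(s^1*(1-s)^2*(t^2*(1-t)^1)) + (3066/625)*(s^1*(1-s)^2*(t^3*(1-t)^0)) + (267155547/200000000)*(s^2*(1-s)^1*(t^0*(1-t)^3)) + (28726047/4000000)*(s^2*(1-s)^1*(t^1*(1-t)^2)) + (244917/20000)*(s^2*(1-s)^1*(t^2*(1-t)^1)) + (2919/400)*(s^2*(1-s)^1*(t^3*(1-t)^0)) + (546399/500000)*(s^3*(1-s)^0*(t^0*(1-t)^3))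 + (3066/625)*(s^3*(1-s)^0*(t^1*(1-t)^2)) + (2919/400)*(s^3*(1-s)^0*(t^2*(1-t)^1)) + (15/4)*(s^3*(1-s)^0*(t^3*(1-t)^0)).
Proof. intros -> ->. field. Qed.

Lemma discr a b : 49/100 <= a <= 1 -> 49/100 <= b <= 1 ->
 a*b*((3/2)*(a+b)+a*b/2)^2 <= 4*(2*a*b+(1-b)*(a/2-3*b/4))*(2*a*b+(1-a)*(b/2-3*a/4)).
Proof. intros Ha Hb.
 set (s := (a - 49/100) * (100/51)). set (t := (b - 49/100) * (100/51)).
 assert (Hs : 0 <= s <= 1) by (unfold s; lra). assert (Ht : 0 <= t <= 1) by (unfold t; lra).
 assert (E := bern_id s t a b ltac:(unfold s; field) ltac:(unfold t; field)).
 assert (P: forall i j, 0 <= s^i*(1-s)^(3-i)*(t^j*(1-t)^(3-j))).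
 { intros. apply Rmult_le_pos; [apply Rmult_le_pos|apply Rmult_le_pos]; apply pow_le; lra. }
 pose proof (P 0%nat 0%nat); pose proof (P 0%nat 1%nat); pose proof (P 0%nat 2%nat); pose proof (P 0%nat 3%nat);
 pose proof (P 1%nat 0%nat); pose proof (P 1%nat 1%nat); pose proof (P 1%nat 2%nat); pose proof (P 1%nat 3%nat);
 pose proof (P 2%nat 0%nat); pose proof (P 2%nat 1%nat); pose proof (P 2%nat 2%nat); pose proof (P 2%nat 3%nat);
 pose proof (P 3%nat 0%nat); pose proof (P 3%nat 1%nat); pose proof (P 3%nat 2%nat); pose proof (P 3%nat 3%nat).
 simpl Nat.sub in *. clearbody s t. lra.
Qed.

Lemma quadform al be ga X Y : 0 < al -> 0 < be -> ga^2 <= 4*al*be -> 0 <= X -> 0 <= Y ->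
  0 <= al*X^2 + be*Y^2 - ga*X*Y.
Proof. intros. assert (E : 4*al*(al*X^2 + be*Y^2 - ga*X*Y) = (2*al*X - ga*Y)^2 + (4*al*be - ga^2)*Y^2) by ring.
 assert (0 <= (2*al*X - ga*Y)^2) by (apply pow2_ge_0).
 assert (0 <= (4*al*be - ga^2)*Y^2) by (apply Rmult_le_pos; [lra| apply pow2_ge_0]).
 assert (0 <= 4*al*(al*X^2 + be*Y^2 - ga*X*Y)) by lra. nra. Qed.

Lemma Ap_pos a b : 49/100 <= a <= 1 -> 49/100 <= b <= 1 -> 0 < 2*a*b+(1-b)*(a/2-3*b/4).
Proof. intros. nra. Qed.

Lemma poly_nonneg p q x : 0 <= p <= 1 -> 0 <= q <= 1 -> 0 <= x <= 51/100 ->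
  0 <= -(3/2)*p*q*((1-x*p)*(1-x*q)^2+(1-x*p)^2*(1-x*q))-(3/4)*x*p*q*(q*(1-x*p)^2+p*(1-x*q)^2)
     +2*(p^2*(1-x*p)*(1-x*q)^2+q^2*(1-x*p)^2*(1-x*q))+(1/2)*x*p*q*(p+q)*(1-x*p)*(1-x*q)
     -(1/2)*p*q*(1-x*p)^2*(1-x*q)^2.
Proof. intros Hp Hq Hx.
 assert (Ha : 49/100 <= 1 - x*p <= 1) by nra. assert (Hb : 49/100 <= 1 - x*q <= 1) by nra.
 set (a := 1 - x*p) in *. set (b := 1 - x*q) in *.
 assert (Ex : x*p = 1 - a) by (unfold a; ring). assert (Ey : x*q = 1 - b) by (unfold b; ring).
 clearbody a b.
 set (A' := 2*a*b+(1-b)*(a/2-3*b/4)). set (B' := 2*a*b+(1-a)*(b/2-3*a/4)).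
 set (C' := (3/2)*(a+b)+a*b/2).
 assert (Eq : -(3/2)*p*q*(a*b^2+a^2*b)-(3/4)*x*p*q*(q*a^2+p*b^2)
     +2*(p^2*a*b^2+q^2*a^2*b)+(1/2)*x*p*q*(p+q)*a*b -(1/2)*p*q*a^2*b^2
     = (b*A')*p^2 + (a*B')*q^2 - (a*b*C')*p*q).
 { unfold A', B', C'. rewrite <- Ex, <- Ey. field. }
 rewrite Eq. apply quadform; try lra.
 - unfold A'. apply Rmult_lt_0_compat; [lra|]. apply Ap_pos; lra.
 - unfold B'. apply Rmult_lt_0_compat; [lra|].
   replace (2*a*b+(1-a)*(b/2-3*a/4)) with (2*b*a+(1-a)*(b/2-3*a/4)) by ring. apply Ap_pos; lra.
 - pose proof (discr a b Ha Hb) as D. fold A' B' C' in D.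
   assert (0 < a*b) by nra.
   replace ((a*b*C')^2) with ((a*b)*(a*b*C'^2)) by ring.
   replace (4*(b*A')*(a*B')) with ((a*b)*(4*A'*B')) by ring.
   apply Rmult_le_compat_l; lra.
Qed.

Definition Fk (x t v : R) : R :=
  2*ph 2 1 x t*ph 0 0 x v + 2*ph 0 0 x t*ph 2 1 x v
  + x/2*(ph 2 1 x t*ph 1 1 x v + ph 1 1 x t * ph 2 1 x v)
  - 3/2*(ph 1 0 x t * ph 1 1 x v + ph 1 1 x t * ph 1 0 x v)
  - 3*x/4*(ph 1 0 x t * ph 2 2 x v + ph 2 2 x t * ph 1 0 x v)
  - 1/2 * ph 1 0 x t * ph 1 0 x v.

Lemma Fk_nonneg x t v : 0 <= x <= 51/100 -> 0 <= Fk x t v.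
Proof. intros Hx. assert (Hx' : -1 < x < 1) by lra.
 destruct (sq_facts x t Hx') as [H1 H2]. destruct (sq_facts x v Hx') as [H3 H4].
 pose proof (w_pos x t Hx'). pose proof (w_pos x v Hx').
 pose proof (s2_bounds t). pose proof (s2_bounds v).
 pose proof (poly_nonneg (sin t ^ 2) (sin v ^ 2) x H5 H6 Hx) as P.
 unfold Fk, ph. rewrite !pow_O, !pow_1.
 set (Qa := sqrt (1 - x * sin t ^ 2)) in *. set (Qb := sqrt (1 - x * sin v ^ 2)) in *.
 set (p := sin t ^ 2) in *. set (q := sin v ^ 2) in *. clearbody Qa Qb p q.
 match goal with |- 0 <= ?e => replace e with
  ((-(3/2)*p*q*((1-x*p)*(1-x*q)^2+(1-x*p)^2*(1-x*q))-(3/4)*x*p*q*(q*(1-x*p)^2+p*(1-x*q)^2)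
     +2*(p^2*(1-x*p)*(1-x*q)^2+q^2*(1-x*p)^2*(1-x*q))+(1/2)*x*p*q*(p+q)*(1-x*p)*(1-x*q)
     -(1/2)*p*q*(1-x*p)^2*(1-x*q)^2) / (Qa * Qb * (1-x*p)^2 * (1-x*q)^2)) end.
 - apply Rdiv_le_0_compat; [exact P|]. repeat apply Rmult_lt_0_compat; try lra; apply pow_lt; lra.
 - field. repeat split; lra.
Qed.

Lemma B_ge x : 0 <= x <= 51/100 ->
  Phi 1 0 x ^ 2 / 4 <= 2 * Phi 2 1 x * Phi 0 0 x + x * Phi 2 1 x * Phi 1 1 x / 2
     - Phi 1 0 x * (3 * Phi 1 1 x / 2 + 3 * x / 4 * Phi 2 2 x).
Proof. intros Hx. assert (Hx' : -1 < x < 1) by lra.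
 set (Kv := Phi 0 0 x). set (Lv := Phi 2 1 x). set (Hv := Phi 1 1 x). set (Gv := Phi 1 0 x). set (Pv := Phi 2 2 x).
 assert (Hin : forall t, 0 <= (2 * ph 2 1 x t) * Kv + (2 * ph 0 0 x t + x/2 * ph 1 1 x t) * Lv
     + (x/2 * ph 2 1 x t - 3/2 * ph 1 0 x t) * Hv
     + (-(3/2) * ph 1 1 x t - 3*x/4 * ph 2 2 x t - 1/2 * ph 1 0 x t) * Gv
     + (-(3*x/4) * ph 1 0 x t) * Pv).
 { intros t.
   assert (HI := lin5 _ _ _ _ _ _ _ _ _ _ (2 * ph 2 1 x t) (2 * ph 0 0 x t + x/2 * ph 1 1 x t)
     (x/2 * ph 2 1 x t - 3/2 * ph 1 0 x t) (-(3/2) * ph 1 1 x t - 3*x/4 * ph 2 2 x t - 1/2 * ph 1 0 x t)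
     (-(3*x/4) * ph 1 0 x t) 0 (PI/2)
     (Phi_is 0 0 x Hx') (Phi_is 2 1 x Hx') (Phi_is 1 1 x Hx') (Phi_is 1 0 x Hx') (Phi_is 2 2 x Hx')).
   assert (HPI : 0 <= PI/2) by (pose proof PI_RGT_0; lra).
   apply (is_RInt_ge_0 _ 0 (PI/2) _ HPI HI).
   intros v _. assert (E : Fk x t v = 2 * ph 2 1 x t * ph 0 0 x v + (2 * ph 0 0 x t + x / 2 * ph 1 1 x t) * ph 2 1 x v +
       (x / 2 * ph 2 1 x t - 3 / 2 * ph 1 0 x t) * ph 1 1 x v +
       (- (3 / 2) * ph 1 1 x t - 3 * x / 4 * ph 2 2 x t - 1 / 2 * ph 1 0 x t) * ph 1 0 x v +
       - (3 * x / 4) * ph 1 0 x t * ph 2 2 x v) by (unfold Fk; field).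
   rewrite <- E. apply Fk_nonneg. lra. }
 assert (HO := lin5 _ _ _ _ _ _ _ _ _ _ (2 * Lv) (2 * Kv + x/2 * Hv) (x/2 * Lv - 3/2 * Gv)
     (-(3/2) * Hv - 1/2 * Gv - 3*x/4 * Pv) (-(3*x/4) * Gv) 0 (PI/2)
     (Phi_is 0 0 x Hx') (Phi_is 2 1 x Hx') (Phi_is 1 1 x Hx') (Phi_is 1 0 x Hx') (Phi_is 2 2 x Hx')).
 assert (HPI : 0 <= PI/2) by (pose proof PI_RGT_0; lra).
 pose proof (is_RInt_ge_0 _ 0 (PI/2) _ HPI HO) as Z.
 assert (Z' : 0 <= 2 * Lv * Kv + (2 * Kv + x / 2 * Hv) * Lv + (x / 2 * Lv - 3 / 2 * Gv) * Hv +
      (- (3 / 2) * Hv - 1 / 2 * Gv - 3 * x / 4 * Pv) * Gv + - (3 * x / 4) * Gv * Pv).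
 { apply Z. intros t _. specialize (Hin t).
   match goal with |- 0 <= ?e => replace e with (2 * ph 2 1 x t * Kv + (2 * ph 0 0 x t + x / 2 * ph 1 1 x t) * Lv +
     (x / 2 * ph 2 1 x t - 3 / 2 * ph 1 0 x t) * Hv +
     (- (3 / 2) * ph 1 1 x t - 3 * x / 4 * ph 2 2 x t - 1 / 2 * ph 1 0 x t) * Gv +
     - (3 * x / 4) * ph 1 0 x t * Pv) by field end. exact Hin. }
 clearbody Kv Lv Hv Gv Pv. nra.
Qed.

Lemma DPhi m j x : -1 < x < 1 -> Derive (fun y => Phi m j y) x = (INR j + /2) * Phi (S m) (S j) x.
Proof. intros. apply is_derive_unique. now apply Phi_deriv. Qed.
Lemma exPhi m j x : -1 < x < 1 -> ex_derive (fun y => Phi m j y) x.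
Proof. intros. eexists. now apply Phi_deriv. Qed.

Ltac dtac Hx := repeat split; try (apply exPhi; lra);
  rewrite ?(DPhi _ _ _ Hx); change (INR 0) with 0; change (INR 1) with 1.

Definition N0 x := (Phi 0 0 x - x * Phi 1 0 x)^2 - (1 - x) * Phi 0 0 x ^ 2.

Lemma N0_deriv x : -1 < x < 1 -> is_derive N0 x (x * Phi 1 0 x ^ 2).
Proof. intros Hx. unfold N0. auto_derive.
 - repeat split; apply exPhi; lra.
 - rewrite !(DPhi _ _ _ Hx). change (INR 0) with 0. change (INR 1) with 1.
   pose proof (id_B1 x Hx) as E2. pose proof (id_B2 x Hx) as E1.
   transitivity (x * Phi 1 0 x ^ 2 + (-(Phi 0 0 x - x * Phi 1 0 x)) * (x * Phi 2 1 x - (Phi 1 1 x - Phi 1 0 x))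
      + Phi 0 0 x * (Phi 0 0 x - Phi 1 0 x - (1 - x) * Phi 1 1 x)).
   + field.
   + rewrite E1, E2. ring.
Qed.

Definition psi x := 2 * x^2 * Phi 1 0 x ^ 2 * Phi 0 0 x / (4 * Phi 0 0 x + x * Phi 1 1 x) - N0 x.

Definition Bq x := 2 * Phi 2 1 x * Phi 0 0 x + x * Phi 2 1 x * Phi 1 1 x / 2
     - Phi 1 0 x * (3 * Phi 1 1 x / 2 + 3 * x / 4 * Phi 2 2 x).

Lemma D4_pos x : 0 <= x < 1 -> 0 < 4 * Phi 0 0 x + x * Phi 1 1 x.
Proof. intros Hx. pose proof (Phi00_ge x Hx). pose proof (Phi_nonneg 1 1 x ltac:(lra)).
 pose proof PI_RGT_0. assert (0 <= x * Phi 1 1 x) by (apply Rmult_le_pos; lra). lra. Qed.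

Lemma psi_deriv x : 0 <= x < 1 ->
  is_derive psi x (4 * x^2 * Phi 1 0 x * Phi 0 0 x * Bq x / (4 * Phi 0 0 x + x * Phi 1 1 x)^2).
Proof. intros Hx0. assert (Hx : -1 < x < 1) by lra. pose proof (D4_pos x Hx0) as HD.
 unfold psi. auto_derive.
 - split; [apply exPhi; lra|]. split; [apply exPhi; lra|]. split; [apply exPhi; lra|].
   split; [apply exPhi; lra|]. split; [lra|]. split; [|exact I].
   exists (x * Phi 1 0 x ^ 2). now apply N0_deriv.
 - rewrite !(DPhi _ _ _ Hx). change (INR 0) with 0. change (INR 1) with 1.
   replace (Derive (fun x0 => N0 x0) x) with (x * Phi 1 0 x ^ 2) by (symmetry; apply is_derive_unique; now apply N0_deriv). unfold Bq.
   set (K0 := Phi 0 0 x) in *. set (G0 := Phi 1 0 x) in *. set (H0 := Phi 1 1 x) in *.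
   set (L0 := Phi 2 1 x) in *. set (P0 := Phi 2 2 x) in *. clearbody K0 G0 H0 L0 P0.
   field. lra.
Qed.

Lemma psi0 : psi 0 = 0.
Proof. unfold psi, N0. unfold Rdiv. ring. Qed.

Lemma N00 : N0 0 = 0.
Proof. unfold N0. ring. Qed.

Lemma psi_pos z : 0 < z <= 51/100 -> 0 < psi z.
Proof. intros Hz.
 destruct (MVT_cor2 psi (fun x => 4 * x^2 * Phi 1 0 x * Phi 0 0 x * Bq x / (4 * Phi 0 0 x + x * Phi 1 1 x)^2) 0 z)
   as [c [Hc [Hc1 Hc2]]].
 - lra.
 - intros c Hc. apply is_derive_Reals. apply psi_deriv. lra.
 - rewrite psi0 in Hc. replace (psi z) with (psi z - 0) by ring. rewrite Hc.
   assert (Hc0 : 0 <= c < 1) by lra.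
   pose proof (Phi10_ge c Hc0). pose proof (Phi00_ge c Hc0). pose proof PI_RGT_0.
   pose proof (B_ge c ltac:(lra)) as HB. fold (Bq c) in HB.
   pose proof (D4_pos c Hc0) as HD.
   apply Rmult_lt_0_compat; [|lra].
   apply Rdiv_lt_0_compat; [|apply pow_lt; lra].
   assert (0 < Phi 1 0 c ^ 2 / 4) by (apply Rdiv_lt_0_compat; [apply pow_lt|]; lra).
   repeat apply Rmult_lt_0_compat; try lra; apply pow_lt; lra.
Qed.

Definition R0 x := N0 x / (x^2 * Phi 0 0 x).

Lemma R0_deriv x : 0 < x < 1 ->
  is_derive R0 x (x * (4 * Phi 0 0 x + x * Phi 1 1 x) / 2 * psi x / (x^2 * Phi 0 0 x)^2).
Proof. intros Hx0. assert (Hx : -1 < x < 1) by lra. assert (Hx1 : 0 <= x < 1) by lra.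
 pose proof (Phi00_ge x Hx1). pose proof PI_RGT_0. pose proof (D4_pos x Hx1).
 unfold R0. auto_derive.
 - split; [exists (x * Phi 1 0 x ^ 2); now apply N0_deriv|].
   split; [apply exPhi; lra|]. split; [|exact I].
   apply Rmult_integral_contrapositive_currified; [|lra]. apply Rmult_integral_contrapositive_currified; lra.
 - replace (Derive (fun x0 => N0 x0) x) with (x * Phi 1 0 x ^ 2) by (symmetry; apply is_derive_unique; now apply N0_deriv).
   rewrite !(DPhi _ _ _ Hx). change (INR 0) with 0. change (INR 1) with 1. unfold psi.
   set (K0 := Phi 0 0 x) in *. set (G0 := Phi 1 0 x) in *. set (Hh := Phi 1 1 x) in *.
   set (N := N0 x). clearbody K0 G0 Hh N.
   field. repeat split; lra.
Qed.

Lemma R0_incr a b : 0 < a -> a < b -> b <= 51/100 -> R0 a < R0 b.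
Proof. intros Ha Hab Hb.
 destruct (MVT_cor2 R0 (fun x => x * (4 * Phi 0 0 x + x * Phi 1 1 x) / 2 * psi x / (x^2 * Phi 0 0 x)^2) a b)
   as [c [Hc [Hc1 Hc2]]].
 - lra.
 - intros c Hc. apply is_derive_Reals. apply R0_deriv. lra.
 - assert (Hc0 : 0 <= c < 1) by lra.
   pose proof (Phi00_ge c Hc0). pose proof PI_RGT_0. pose proof (D4_pos c Hc0).
   pose proof (psi_pos c ltac:(lra)).
   assert (0 < c * (4 * Phi 0 0 c + c * Phi 1 1 c) / 2 * psi c / (c^2 * Phi 0 0 c)^2).
   { apply Rdiv_lt_0_compat. apply Rmult_lt_0_compat; [|lra]. apply Rdiv_lt_0_compat; [|lra].
     apply Rmult_lt_0_compat; lra. apply pow_lt. apply Rmult_lt_0_compat; [apply pow_lt|]; lra. }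
   assert (0 < R0 b - R0 a) by (rewrite Hc; apply Rmult_lt_0_compat; lra). lra.
Qed.

Lemma N0_lower y : 0 <= y < 1 -> y^2 * (PI/4)^2 / 2 <= N0 y.
Proof. intros Hy. destruct (Req_dec y 0) as [->|Hy0].
 - rewrite N00. unfold Rdiv. nra.
 - destruct (MVT_cor2 (fun y => N0 y - y^2 * (PI/4)^2/2) (fun y => y * Phi 1 0 y ^ 2 - y * (PI/4)^2) 0 y)
     as [c [Hc [Hc1 Hc2]]].
   + lra.
   + intros c Hc. apply is_derive_Reals.
     apply (is_derive_minus N0 (fun y => y^2 * (PI/4)^2/2) c (c * Phi 1 0 c ^ 2) (c * (PI/4)^2)).
     apply N0_deriv; lra. auto_derive; auto. field.
   + rewrite N00 in Hc. pose proof (Phi10_ge c ltac:(lra)). pose proof PI_RGT_0.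
     assert (0 <= c * Phi 1 0 c ^ 2 - c * (PI/4)^2).
     { replace (c * Phi 1 0 c ^ 2 - c * (PI/4)^2) with (c * (Phi 1 0 c - PI/4) * (Phi 1 0 c + PI/4)) by ring.
       apply Rmult_le_pos; [apply Rmult_le_pos|]; lra. }
     assert (0 <= (c * Phi 1 0 c ^ 2 - c * (PI / 4) ^ 2) * (y - 0)) by (apply Rmult_le_pos; lra).
     unfold Rdiv in *. lra.
Qed.

Lemma alpha_bound : alpha8 < 51/100.
Proof. unfold alpha8.
 assert (2449/1000 < sqrt 6).
 { destruct (Rlt_or_le (2449/1000) (sqrt 6)) as [h|h]; [exact h|].
   pose proof (sqrt_sqrt 6 ltac:(lra)). pose proof (sqrt_pos 6). nra. }
 lra. Qed.

Lemma ratio_eq x : 0 < x < 1 -> ratio8 x = R0 x.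
Proof. intros Hx. unfold ratio8, R0, N0. rewrite K_eq, E_eq by lra. reflexivity. Qed.

Lemma R0_ge x : 0 < x <= 51/100 -> PI / 16 <= R0 x.
Proof. intros Hx. pose proof PI_RGT_0 as HPI.
 destruct (Rle_or_lt (PI/16) (R0 x)) as [h|h]; [exact h|exfalso].
 set (f := fun y => ((PI/4)^2/2) / Phi 0 0 y).
 assert (Hf0 : f 0 = PI/16).
 { unfold f. assert (HP := Phi00_ge 0 ltac:(lra)). 
   replace (Phi 0 0 0) with (PI/2). field. lra.
   symmetry. apply (Phi00_0). }
 assert (Hc : continuity_pt f 0).
 { unfold f. apply continuity_pt_div. apply continuity_pt_const. intros a b; reflexivity.
   apply derivable_continuous_pt.
   exists ((INR 0 + /2) * Phi 1 1 0). apply is_derive_Reals. apply Phi_deriv. lra.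
   rewrite Phi00_0. lra. }
 destruct (Hc (PI/16 - R0 x) ltac:(lra)) as [del [Hdel Hd]].
 set (y := Rmin (del/2) (x/2)).
 assert (Hy : 0 < y <= x/2). { unfold y. apply Rmin_case_strong; intros; lra. }
 assert (Hyd : y < del). { unfold y. apply Rmin_case_strong; intros; lra. }
 specialize (Hd y). simpl in Hd. unfold R_dist in Hd.
 assert (Hfy : Rabs (f y - f 0) < PI/16 - R0 x).
 { apply Hd. split. split; [exact I|lra]. rewrite Rminus_0_r, Rabs_right; lra. }
 rewrite Hf0 in Hfy. apply Rabs_def2 in Hfy.
 assert (Hinc : R0 y < R0 x) by (apply R0_incr; lra).
 assert (Hy1 : 0 <= y < 1) by lra.
 pose proof (N0_lower y Hy1). pose proof (Phi00_ge y Hy1).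
 assert (f y <= R0 y).
 { unfold f, R0. assert (0 < y^2) by (apply pow_lt; lra).
   apply Rle_trans with ((y^2 * (PI/4)^2/2) / (y^2 * Phi 0 0 y)).
   - right. field. lra.
   - unfold Rdiv. apply Rmult_le_compat_r; [|lra].
     apply Rlt_le, Rinv_0_lt_compat, Rmult_lt_0_compat; lra. }
 lra.
Qed.

Theorem mainTheorem8 :
  (forall x y : R, 0 < x -> x < y -> y < alpha8 -> ratio8 x < ratio8 y) /\
  (forall x : R, 0 < x < alpha8 ->
     E x ^ 2 - (1 - x) * K x ^ 2 >= PI / 16 * (x ^ 2 * K x)).
Proof. pose proof alpha_bound. split.
 - intros x y Hx Hxy Hy. rewrite !ratio_eq by lra. apply R0_incr; lra.
 - intros x Hx. pose proof (R0_ge x ltac:(lra)) as HR.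
   assert (Hx1 : 0 <= x < 1) by lra.
   rewrite K_eq, E_eq by lra. pose proof (Phi00_ge x Hx1). pose proof PI_RGT_0.
   assert (0 < x^2 * Phi 0 0 x) by (apply Rmult_lt_0_compat; [apply pow_lt|]; lra).
   unfold R0, N0 in HR. apply Rle_ge.
   apply (Rmult_le_compat_r (x^2 * Phi 0 0 x)) in HR; [|lra].
   unfold Rdiv at 2 in HR. rewrite Rmult_assoc, Rinv_l in HR by lra. lra.
Qed.
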